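(* For all integers $k$ and $D$ with $D\ge k\ge 2$, there exists a $k$-degenerate graph $H_{D,k}$ with maximum degree $D$ such that $H_{D,k}^2$ is not $\big((2k-1)D-k^2-1\big)$-degenerate; in fact $H_{D,k}^2$ contains an induced subgraph of minimum degree $(2k-1)D-k^2$.
   Context: A graph is $k$-degenerate if every subgraph has a vertex of degree at most $k$. The square $H^2$ is obtained from $H$ by adding an edge between every pair of vertices at distance 2 in $H$. *)

(* Defs.v *)
From mathcomp Require Import all_boot.
Set Implicit Arguments. Unset Strict Implicit. Unset Printing Implicit Defensive.

Definition simple_graph (T : finType) (e : rel T) : Prop :=
  symmetric e /\ irreflexive e.

Definition nbrs_in (T : finType) (e : rel T) (S : {set T}) (x : T) : {set T} :=
  [set y in S | e x y].

Definition deg (T : finType) (e : rel T) (x : T) : nat := #|[set y | e x y]|.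

Definition max_degree_eq (T : finType) (e : rel T) (D : nat) : Prop :=
  (forall x, deg e x <= D) /\ (exists x, deg e x = D).

Definition degenerate (T : finType) (e : rel T) (k : nat) : Prop :=
  forall S : {set T}, S != set0 -> exists2 x, x \in S & #|nbrs_in e S x| <= k.

Definition graph_square (T : finType) (e : rel T) : rel T :=
  fun x y => (x != y) && (e x y || [exists z, e x z && e z y]).

Definition has_induced_min_degree (T : finType) (e : rel T) (m : nat) : Prop :=
  exists2 S : {set T}, S != set0 & forall x, x \in S -> m <= #|nbrs_in e S x|.

(* Main.v *)
Require Import Defs.
From mathcomp Require Import all_boot zify.
Set Implicit Arguments. Unset Strict Implicit. Unset Printing Implicit Defensive.

Lemma card_lt (n k : nat) : k <= n -> #|[set a : 'I_n | a < k]| = k.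
Proof.
move=> kn.
have -> : [set a : 'I_n | a < k] = [set widen_ord kn i | i : 'I_k].
  apply/setP=> a; rewrite inE; apply/idP/imsetP => [ak|[i _ ->] //=].
  by exists (Ordinal ak) => //; apply: val_inj.
by rewrite card_imset ?card_ord // => i j /(congr1 val) /= /val_inj.
Qed.

Lemma countA (k d : nat) (v : {ffun 'I_d.+1 -> 'I_d.+1}) :
  k <= d.+1 -> (forall j : 'I_d.+1, k <= j -> v j < k) ->
  #|[set ja : 'I_d.+1 * 'I_d.+1 | (ja.2 != v ja.1) && ((ja.1 < k) || (ja.2 < k))]|
  = k * d + (d.+1 - k) * (k - 1).
Proof.
move=> kn hv.
rewrite -sum1_card.
rewrite (eq_bigl (fun ja : 'I_d.+1 * 'I_d.+1 => (ja.2 != v ja.1) && ((ja.1 < k) || (ja.2 < k)))); last by move=> p; rewrite inE.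
rewrite -(pair_big_dep xpredT (fun j a => (a != v j) && ((j < k) || (a < k))) (fun _ _ => 1)) /=.
under eq_bigr => j _ do rewrite sum1_card.
rewrite (eq_bigr (fun j : 'I_d.+1 => if j < k then d else k - 1)); last first.
  move=> j _; case: ifP => jk.
    rewrite (eq_card (B := predC1 (v j))); first by rewrite cardC1 card_ord.
    by move=> a; rewrite unfold_in /= andbT.
  have vj : v j < k by apply: hv; rewrite leqNgt jk.
  rewrite (eq_card (B := [set a : 'I_d.+1 | a < k] :\ v j)).
    have := cardsD1 (v j) [set a : 'I_d.+1 | a < k]; rewrite inE vj card_lt //= => H; lia.
  by move=> a; rewrite unfold_in !inE /= andbC.
rewrite -(big_mkord xpredT (fun j => if j < k then d else k - 1)).
rewrite (big_cat_nat _ (n := k)) //=.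
rewrite (eq_big_nat _ _ (F2 := fun _ => d)); last by move=> i /andP [_ ->].
rewrite [X in _ + X](eq_big_nat _ _ (F2 := fun _ => k - 1)); last first.
  by move=> i /andP [ki _]; rewrite ltnNge ki.
rewrite !sum_nat_const_nat; lia.
Qed.
Definition Pt d := {ffun 'I_d.+1 -> 'I_d.+1}.
Definition upd d (v : Pt d) (j a : 'I_d.+1) : Pt d := [ffun i => if i == j then a else v i].
Definition inc k d (v : Pt d) (j : 'I_d.+1) (g : Pt d) : bool :=
  [&& g j == ord0, [forall i, (i != j) ==> (v i == g i)] & (j < k) || (v j < k)].
Definition Vt d : finType := (Pt d + ('I_d.+1 * Pt d))%type.
Definition edge k d : rel (Vt d) := fun x y =>
  match x, y with
  | inl v, inr p => inc k v p.1 p.2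
  | inr p, inl v => inc k v p.1 p.2
  | _, _ => false end.
Arguments edge k d : clear implicits.

Lemma updE d (v : Pt d) j a i : upd v j a i = if i == j then a else v i.
Proof. by rewrite ffunE. Qed.

Lemma inc_g k d (v : Pt d) j g : inc k v j g -> g = upd v j ord0.
Proof.
case/and3P => /eqP g0 /forallP H _; apply/ffunP => i; rewrite updE.
by case: eqP => [->|/eqP ne] //; have := H i; rewrite ne /= => /eqP.
Qed.

Lemma inc_v k d (v : Pt d) j g : inc k v j g -> v = upd g j (v j).
Proof.
case/and3P => _ /forallP H _; apply/ffunP => i; rewrite updE.
by case: eqP => [->|/eqP ne] //; have := H i; rewrite ne /= => /eqP.
Qed.

Lemma upd_inj d (v : Pt d) j a j' a' : a != v j -> upd v j a = upd v j' a' -> j = j' /\ a = a'.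
Proof.
move=> ne /ffunP /(_ j); rewrite !updE eqxx.
case: eqP => [-> -> //|_ E]; by rewrite E eqxx in ne.
Qed.

Lemma edge_sym k d : symmetric (edge k d).
Proof. by move=> [v|p] [w|q]. Qed.

Lemma edge_irr k d : irreflexive (edge k d).
Proof. by case. Qed.

Lemma deg_le k d (x : Vt d) : deg (edge k d) x <= d.+1.
Proof.
rewrite /deg; case: x => [v|[j g]].
  apply: (leq_trans (n := #|[set (inr (j, upd v j ord0) : Vt d) | j : 'I_d.+1]|)).
    apply: subset_leq_card; apply/subsetP => [[w|[j g]]]; rewrite inE //= => H.
    by apply/imsetP; exists j => //; rewrite (inc_g H).
  by apply: (leq_trans (leq_imset_card _ _)); rewrite cardT size_enum_ord.
apply: (leq_trans (n := #|[set (inl (upd g j a) : Vt d) | a : 'I_d.+1]|)).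
  apply: subset_leq_card; apply/subsetP => [[w|[j' g']]]; rewrite inE //= => H.
  by apply/imsetP; exists (w j) => //; rewrite -(inc_v H).
by apply: (leq_trans (leq_imset_card _ _)); rewrite cardT size_enum_ord.
Qed.

Lemma edge_degenerate k d : k <= d.+1 -> degenerate (edge k d) k.
Proof.
move=> kn S SN.
case: (pickP [pred x in S | if x is inr p then k <= p.1 else false]) => [x /andP [xS hx] | none].
  exists x => //; case: x xS hx => // [[j g]] xS /= kj.
  apply: (leq_trans (n := #|[set (inl (upd g j (widen_ord kn a)) : Vt d) | a : 'I_k]|)).
    apply: subset_leq_card; apply/subsetP => [[w|[j' g']]]; rewrite inE //= => /andP [_ H] //.
    have wk : w j < k by case/and3P: H => _ _; rewrite ltnNge kj.
    apply/imsetP; exists (Ordinal wk) => //; rewrite {1}(inc_v H); congr (inl (upd _ _ _)).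
    exact: val_inj.
  by apply: (leq_trans (leq_imset_card _ _)); rewrite cardT size_enum_ord.
case: (pickP [pred x in S | if x is inl _ then true else false]) => [x /andP [xS hx] | none2].
  exists x => //; case: x xS hx => // v xS _.
  apply: (leq_trans (n := #|[set (inr (widen_ord kn i, upd v (widen_ord kn i) ord0) : Vt d) | i : 'I_k]|)).
    apply: subset_leq_card; apply/subsetP => [[w|[j g]]]; rewrite inE //= => /andP [yS H] //.
    have jk : j < k by have := none (inr (j, g)); rewrite /= yS /= ltnNge => ->.
    apply/imsetP; exists (Ordinal jk) => //; rewrite (inc_g H).
    by have -> : widen_ord kn (Ordinal jk) = j by apply: val_inj.
  by apply: (leq_trans (leq_imset_card _ _)); rewrite cardT size_enum_ord.
case/set0Pn: SN => x xS; exists x => //.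
rewrite (_ : nbrs_in _ _ _ = set0) ?cards0 //; apply/setP => y; rewrite !inE.
case: x xS => [v|p] xS; first by have := none2 (inl v); rewrite /= xS.
case: y => [w|q] /=; last by rewrite andbF.
by move: (none2 (inl w)); rewrite /= andbT => ->.
Qed.

Definition PP k d (v : Pt d) := [forall j : 'I_d.+1, (k <= j) ==> (v j < k)].
Definition S0 k d : {set Vt d} := [set x | if x is inl v then PP k v else false].

Lemma sq_deg k d (v : Pt d) : k <= d.+1 -> PP k v ->
  k * d + (d.+1 - k) * (k - 1) <= #|nbrs_in (graph_square (edge k d)) (S0 k d) (inl v)|.
Proof.
move=> kn Pv.
have hv : forall j : 'I_d.+1, k <= j -> v j < k.
  by move=> j kj; move/forallP: Pv => /(_ j); rewrite kj.
rewrite -(countA kn hv).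
set A := [set ja | _].
rewrite -(card_in_imset (f := fun ja : 'I_d.+1 * 'I_d.+1 => (inl (upd v ja.1 ja.2) : Vt d)) (D := A)).
  apply: subset_leq_card; apply/subsetP => y /imsetP [[j a] jaA ->] /=.
  move: jaA; rewrite inE /= => /andP [ne ok].
  rewrite inE; apply/andP; split.
    rewrite inE; apply/forallP => i; apply/implyP => ki; rewrite updE.
    case: eqP => [eij|_]; last exact: hv.
    by subst i; move: ok; rewrite ltnNge ki.
  rewrite /graph_square; apply/andP; split.
    apply/eqP => -[] /ffunP /(_ j); rewrite updE eqxx => E; by rewrite E eqxx in ne.
  apply/orP; right; apply/existsP; exists (inr (j, upd v j ord0)); apply/andP; split => /=.
    rewrite /inc updE !eqxx /=; apply/andP; split.
      by apply/forallP=> i; apply/implyP => nij; rewrite updE (negbTE nij).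
    by case: (ltnP j k) => //= kj; exact: hv.
  rewrite /inc !updE !eqxx /=; apply/andP; split; last exact: ok.
  by apply/forallP=> i; apply/implyP => nij; rewrite !updE (negbTE nij).
move=> [j a] [j' a'] /= jaA _ [] E.
move: jaA; rewrite inE /= => /andP [ne _].
by have [-> ->] := upd_inj ne E.
Qed.

Lemma arith k d : 2 <= k -> k <= d.+1 -> (2 * k - 1) * d.+1 - k ^ 2 = k*d + (d.+1 - k)*(k-1).
Proof. move=> h1 h2.
have [k' ek] : exists k', k = k'.+2 by exists (k-2); lia. subst k.
have [r ->] : exists r, d = k'.+1 + r by exists (d - k'.+1); lia.
rewrite (_ : k'.+2 ^ 2 = k'.+2 * k'.+2) //.
have -> : (k'.+1 + r).+1 - k'.+2 = r by lia. have -> : 2 * k'.+2 - 1 = (2*k').+3 by lia.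
 have -> : k'.+2 - 1 = k'.+1 by lia.
nia. Qed.

Theorem mainTheorem12 (k D : nat) :
  2 <= k -> k <= D ->
  exists (T : finType) (e : rel T),
    [/\ simple_graph e, degenerate e k, max_degree_eq e D,
        ~ degenerate (graph_square e) ((2 * k - 1) * D - k ^ 2 - 1)
      & has_induced_min_degree (graph_square e) ((2 * k - 1) * D - k ^ 2)].
Proof.
move=> k2; case: D => [|d] kD; first by lia.
have v0P : PP k ([ffun _ => ord0] : Pt d).
  by apply/forallP => j; apply/implyP => _; rewrite ffunE /=; lia.
have S0N : S0 k d != set0 by apply/set0Pn; exists (inl [ffun _ => ord0]); rewrite inE.
have HS : forall x, x \in S0 k d ->
    (2 * k - 1) * d.+1 - k ^ 2 <= #|nbrs_in (graph_square (edge k d)) (S0 k d) x|.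
  move=> [v|p]; rewrite inE // => Pv; rewrite arith //; exact: sq_deg.
exists (Vt d), (edge k d); split.
- by split; [exact: edge_sym | exact: edge_irr].
- exact: edge_degenerate.
- split; first exact: deg_le.
  exists (inl [ffun _ => ord0]); apply/eqP; rewrite eqn_leq deg_le /=.
  set v0 : Pt d := [ffun _ => ord0].
  have E : #|[set (inr (j, upd v0 j ord0) : Vt d) | j : 'I_d.+1]| = d.+1.
    by rewrite card_imset ?cardT ?size_enum_ord // => i j [].
  rewrite -[X in X <= _]E.
  apply: subset_leq_card; apply/subsetP => y /imsetP [j _ ->]; rewrite inE /= /inc.
  rewrite updE eqxx /=; apply/andP; split.
    by apply/forallP=> i; apply/implyP => nij; rewrite updE (negbTE nij).
  by apply/orP; right; rewrite /v0 ffunE /=; lia.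
- move=> Hdeg; have [x xS H] := Hdeg (S0 k d) S0N.
  have := HS x xS; rewrite arith // in H *; lia.
- by exists (S0 k d).
Qed.
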